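(* Let $G$ be a connected graph with $12$ vertices. Suppose one of the following holds: (1) $\Delta(G)=11$ and $e(G)=12+k$ for some $1\le k\le 8$; (2) $\Delta(G)=10$ and $e(G)=12+k$ for some $4\le k\le 8$; (3) $\Delta(G)=9$ and $e(G)=12+k$ for some $7\le k\le 8$. Then $R(G)>\sqrt{11}+\frac{2(k+1)}{12\sqrt{11}}$.
   Context: All graphs are finite and simple; $e(G)$ is the number of edges and $\Delta(G)$ the maximum degree. For a vertex $u$, $d(u)$ is its degree. The Randić index is $R(G)=\sum_{\{u,v\}\in E(G)} \frac{1}{\sqrt{d(u)d(v)}}$. *)

(* Defs.v *)
From HB Require Import structures.
From mathcomp Require Import all_boot all_order all_algebra.
Set Implicit Arguments. Unset Strict Implicit. Unset Printing Implicit Defensive.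
Import Order.TTheory GRing.Theory Num.Theory.

Definition simple_graph (T : finType) (adj : rel T) : Prop :=
  symmetric adj /\ irreflexive adj.

Definition connected_graph (T : finType) (adj : rel T) : Prop :=
  forall x y : T, connect adj x y.

Definition deg (T : finType) (adj : rel T) (u : T) : nat := #|[set v | adj u v]|.

Definition max_deg (T : finType) (adj : rel T) : nat := (\max_(u : T) deg adj u)%N.

Definition num_edges (T : finType) (adj : rel T) : nat :=
  #|[set p : T * T | adj p.1 p.2 && (enum_rank p.1 < enum_rank p.2)%N]|.

Local Open Scope ring_scope.

Definition randic (R : rcfType) (T : finType) (adj : rel T) : R :=
  \sum_(p : T * T | adj p.1 p.2 && (enum_rank p.1 < enum_rank p.2)%N)
     (Num.sqrt ((deg adj p.1)%:R * (deg adj p.2)%:R))^-1.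

(* Main.v *)
Require Import Defs.
From HB Require Import structures.
From mathcomp Require Import all_boot all_order all_algebra.
From mathcomp Require Import ring lra zify.
Import Order.TTheory GRing.Theory Num.Theory.
Set Implicit Arguments. Unset Strict Implicit. Unset Printing Implicit Defensive.

Section Graph.
Local Open Scope ring_scope.
Variable (R : rcfType) (T : finType) (adj : rel T).
Hypothesis Hsym : symmetric adj.
Hypothesis Hirr : irreflexive adj.

Definition OS (F : T -> T -> R) := \sum_u \sum_(v | adj u v) F u v.

Lemma pair_half (F : T -> T -> R) : (forall u v, F u v = F v u) ->
  (\sum_(p : T * T | adj p.1 p.2 && (enum_rank p.1 < enum_rank p.2)%N) F p.1 p.2) *+ 2 = OS F.
Proof.
move=> FS; rewrite /OS pair_big_dep /=.
rewrite [RHS](bigID (fun p : T * T => (enum_rank p.1 < enum_rank p.2)%N)) /= mulr2n.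
congr (_ + _).
rewrite (reindex_inj (h := fun p : T * T => (p.2, p.1))); last first.
  by move=> [a b] [c d] /= [-> ->].
apply: eq_big => [[a b]|[a b] _] /=; last exact: FS.
rewrite Hsym; case Hab: (adj a b) => //=.
have nab : enum_rank a != enum_rank b.
  apply/eqP => /enum_rank_inj eab; by rewrite eab Hirr in Hab.
rewrite -leqNgt [RHS]leq_eqVlt.
have -> : (nat_of_ord (enum_rank b) == enum_rank a) = false by rewrite eq_sym; exact: negbTE nab.
by [].
Qed.

Lemma deg_sum u : (deg adj u)%:R = \sum_(v | adj u v) (1 : R).
Proof. by rewrite /deg cardsE sumr_const. Qed.

Lemma edges_OS : (num_edges adj)%:R *+ 2 = OS (fun _ _ => 1).
Proof.
rewrite -pair_half // /num_edges cardsE sumr_const //.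
Qed.


Lemma sum_if_eq (w : T) (G : T -> R) :
  \sum_u (if u == w then G u else 0) = G w.
Proof. by rewrite -big_mkcond big_pred1_eq. Qed.

Variable w : T.
Definition HS (F : T -> T -> R) :=
  \sum_u \sum_v (if [&& u != w, v != w & adj u v] then F u v else 0).

Lemma decomp F : OS F = \sum_(v | adj w v) F w v + \sum_(u | adj u w) F u w + HS F.
Proof.
rewrite /OS /HS.
have E : forall u, \sum_(v | adj u v) F u v =
   (if u == w then \sum_v (if adj u v then F u v else 0) else 0)
   + (if adj u w then F u w else 0)
   + \sum_v (if [&& u != w, v != w & adj u v] then F u v else 0).
  move=> u; rewrite big_mkcond /=.
  case: (eqVneq u w) => [->|uw] /=.
    rewrite Hirr addr0.
    by rewrite [X in _ = _ + X]big1 ?addr0 // => v _; rewrite andFb.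
  rewrite add0r (bigD1 w) //= [in RHS](bigD1 w) //= eqxx /= add0r; congr (_ + _).
  by apply: eq_bigr => v vw; rewrite vw.
rewrite (eq_bigr _ (fun u _ => E u)) !big_split /= sum_if_eq.
rewrite -big_mkcond /=; congr (_ + _ + _); by rewrite [RHS]big_mkcond.
Qed.

Lemma HS_sym G : HS (fun u v => G v u) = HS G.
Proof.
rewrite /HS exchange_big /=; apply: eq_bigr => u _; apply: eq_bigr => v _.
by rewrite Hsym andbCA.
Qed.

Lemma OS_decomp F : (forall u v, F u v = F v u) ->
  OS F = (\sum_(v | adj w v) F w v) *+ 2 + HS F.
Proof.
move=> FS; rewrite decomp mulr2n.
have -> : \sum_(u | adj u w) F u w = \sum_(v | adj w v) F w v.
  apply: eq_big => [v|v _]; [exact: Hsym | exact: FS].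
by [].
Qed.

Lemma HS_ge (mu : R) G : (forall u v, [&& u != w, v != w & adj u v] -> mu <= G u v) ->
  HS (fun _ _ => mu) <= HS G.
Proof.
move=> H; apply: ler_sum => u _; apply: ler_sum => v _.
by case: ifP => // /H.
Qed.

Lemma HS_const (mu : R) : HS (fun _ _ => mu) = mu * HS (fun _ _ => 1).
Proof.
rewrite /HS mulr_sumr; apply: eq_bigr => u _; rewrite mulr_sumr.
by apply: eq_bigr => v _; case: ifP; rewrite ?mulr1 ?mulr0.
Qed.

Lemma HS_lin G1 G2 G3 : HS (fun u v => G1 u v - G2 u v - G3 u v) = HS G1 - HS G2 - HS G3.
Proof.
rewrite /HS -!sumrB; apply: eq_bigr => u _; rewrite -!sumrB.
by apply: eq_bigr => v _; case: ifP; rewrite ?subr0.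
Qed.

Lemma HS_cu (c : T -> R) :
  HS (fun u v => if adj w u then c u else 0) =
  \sum_(u | adj w u) c u * ((deg adj u)%:R - 1).
Proof.
rewrite /HS [RHS]big_mkcond; apply: eq_bigr => u _.
case: ifP => Hwu; last by rewrite big1 // => v _; case: ifP.
have uw : u != w by apply/eqP => E; rewrite E Hirr in Hwu.
rewrite deg_sum [X in _ = _ * (X - 1)](bigD1 w) /=; last by move: Hwu; rewrite Hsym.
rewrite addrC addrK mulr_sumr [RHS]big_mkcond /=; apply: eq_bigr => v _.
rewrite uw /=; case: (v != w); case: (adj u v) => //=; by rewrite mulr1.
Qed.

End Graph.


Section Tri.
Variable (T : finType) (adj : rel T).
Hypothesis Hsym : symmetric adj.
Hypothesis Hirr : irreflexive adj.

Lemma degN x : deg adj x = \sum_y (adj x y : nat).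
Proof.
rewrite /deg cardsE -sum1_card big_mkcond /=.
by apply: eq_bigr => y _; rewrite unfold_in; case: (adj x y).
Qed.

Lemma handshake (R : rcfType) : (num_edges adj * 2 = \sum_x deg adj x)%N.
Proof.
apply/eqP; rewrite -(eqr_nat R) natrM natr_sum mulr_natr (edges_OS R Hsym Hirr).
by rewrite /OS; apply/eqP; apply: eq_bigr => u _; rewrite deg_sum.
Qed.


Lemma sum3 (u v w : T) (f : T -> nat) : u != v -> u != w -> v != w ->
  (\sum_x (((x == u) || (x == v) || (x == w)) : nat) * f x = f u + f v + f w)%N.
Proof.
move=> uv uw vw.
rewrite (bigD1 u) // (bigD1 v) /=; last by rewrite eq_sym.
rewrite (bigD1 w) /=; last by rewrite !(eq_sym w) uw vw.
rewrite big1 ?addn0.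
  by rewrite !eqxx !orbT /= !mul1n addnA.
by move=> x /andP[/andP[xu xv] xw]; rewrite (negbTE xw) (negbTE xv) (negbTE xu).
Qed.

Lemma triple (R : rcfType) (u v w : T) : u != v -> u != w -> v != w ->
  (deg adj u + deg adj v + deg adj w <= num_edges adj + 3)%N.
Proof.
move=> uv uw vw.
set P := fun x : T => ((x == u) || (x == v) || (x == w)).
set S := fun y => (\sum_x ((~~ P x) : nat) * adj y x)%N.
have HB : forall y, P y -> (deg adj y <= S y + 2)%N.
  move=> y Py; rewrite degN.
  have -> : (\sum_x (adj y x : nat) = \sum_x (P x : nat) * adj y x + S y)%N.
    rewrite /S -big_split /=; apply: eq_bigr => x _.
    by case: (P x); rewrite /= ?mul1n ?mul0n ?addn0.
  rewrite sum3 // addnC leq_add2l.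
  move: Py; rewrite /P => /orP[/orP[]|] /eqP ->; rewrite Hirr;
  by case: (adj _ _); case: (adj _ _).
have HA : (\sum_x deg adj x >= \sum_x (P x : nat) * deg adj x + (S u + S v + S w))%N.
  have -> : (S u + S v + S w = \sum_y (P y : nat) * S y)%N by rewrite sum3.
  have -> : (\sum_y (P y : nat) * S y = \sum_x ((~~ P x) : nat) * \sum_y (P y : nat) * adj x y)%N.
    rewrite /S; under eq_bigr => y _ do rewrite big_distrr /=.
    rewrite exchange_big /=; apply: eq_bigr => x _; rewrite big_distrr /=.
    by apply: eq_bigr => y _; rewrite Hsym mulnCA.
  rewrite -big_split /=; apply: leq_sum => x _.
  case: (P x); rewrite /= ?mul1n ?mul0n ?addn0 // add0n degN.
  by apply: leq_sum => y _; case: (P y); rewrite /= ?mul1n ?mul0n.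
rewrite -handshake // sum3 // in HA.
have := HB u; have := HB v; have := HB w.
rewrite /P !eqxx !orbT /= => H1 H2 H3.
have := H1 erefl; have := H2 erefl; have := H3 erefl. lia.
Qed.

End Tri.


Section Num.
Local Open Scope ring_scope.
Variable R : rcfType.
Definition isq (a : nat) : R := (Num.sqrt a%:R)^-1.
Definition ell (a : nat) : R := (a%:R + Num.sqrt a%:R)^-1.
Definition qT (a : nat) : R :=
  match a with
  | 1 => 1000/1000
  | 2 => 707/1000
  | 3 => 577/1000
  | 4 => 500/1000
  | 5 => 447/1000
  | 6 => 408/1000
  | 7 => 377/1000
  | 8 => 353/1000
  | 9 => 333/1000
  | 10 => 316/1000
  | 11 => 301/1000
  | 12 => 288/1000
  | 13 => 277/1000
  | _ => 0
  end.
Definition LT (a : nat) : R :=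
  match a with
  | 1 => 500/1000
  | 2 => 293/1000
  | 3 => 212/1000
  | 4 => 167/1000
  | 5 => 139/1000
  | 6 => 119/1000
  | 7 => 104/1000
  | 8 => 93/1000
  | 9 => 84/1000
  | 10 => 76/1000
  | 11 => 70/1000
  | 12 => 65/1000
  | 13 => 61/1000
  | _ => 0
  end.

Lemma sqrt_facts (a : nat) : 0 <= Num.sqrt (a%:R : R) /\ Num.sqrt (a%:R : R) ^+ 2 = a%:R.
Proof. by split; [exact: sqrtr_ge0 | rewrite sqr_sqrtr // ler0n]. Qed.

Lemma isq_ge (a : nat) (q : R) : (0 < a)%N -> 0 <= q -> q ^+ 2 * a%:R <= 1 -> q <= isq a.
Proof.
move=> a0 q0 h; have [x0 x2] := sqrt_facts a.
have xp : 0 < Num.sqrt (a%:R : R) by rewrite sqrtr_gt0 ltr0n.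
rewrite /isq -div1r ler_pdivlMr //.
move: x0 x2 h xp; set x := Num.sqrt _ => x0 x2 h xp.
rewrite -x2 in h. nra.
Qed.

Lemma ell_le (a : nat) (l lo : R) : (0 < a)%N -> 0 <= lo -> lo ^+ 2 <= a%:R -> 1 <= l * (a%:R + lo) -> ell a <= l.
Proof.
move=> a0 lo0 h1 h2; have [x0 x2] := sqrt_facts a.
have ap : 0 < (a%:R : R) by rewrite ltr0n.
rewrite /ell -div1r ler_pdivrMr; last by lra.
move: x0 x2 h1; set x := Num.sqrt _ => x0 x2 h1.
have xlo : lo <= x by rewrite -x2 in h1; nra.
nra.
Qed.

Lemma io_le (D : nat) (io : R) : (0 < D)%N -> 0 <= io -> 1 <= io ^+ 2 * D%:R -> (Num.sqrt (D%:R : R))^-1 <= io.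
Proof.
move=> D0 i0 h; have [x0 x2] := sqrt_facts D.
have xp : 0 < Num.sqrt (D%:R : R) by rewrite sqrtr_gt0 ltr0n.
rewrite -div1r ler_pdivrMr //.
move: x0 x2 h xp; set x := Num.sqrt _ => x0 x2 h xp.
rewrite -x2 !expr2 in h. have ix : 0 <= io * x by rewrite mulr_ge0.
nra.
Qed.
Lemma t1 : qT 1 <= isq 1 /\ ell 1 <= LT 1 /\ 0 <= qT 1.
Proof.
rewrite /=. split. apply: isq_ge => //. all: rewrite ?expr2; try lra. split. apply: (ell_le (lo := 1000/1000)) => //. all: rewrite ?expr2; try lra.
Qed.
Lemma t2 : qT 2 <= isq 2 /\ ell 2 <= LT 2 /\ 0 <= qT 2.
Proof.
rewrite /=. split. apply: isq_ge => //. all: rewrite ?expr2; try lra. split. apply: (ell_le (lo := 1414/1000)) => //. all: rewrite ?expr2; try lra.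
Qed.
Lemma t3 : qT 3 <= isq 3 /\ ell 3 <= LT 3 /\ 0 <= qT 3.
Proof.
rewrite /=. split. apply: isq_ge => //. all: rewrite ?expr2; try lra. split. apply: (ell_le (lo := 1732/1000)) => //. all: rewrite ?expr2; try lra.
Qed.
Lemma t4 : qT 4 <= isq 4 /\ ell 4 <= LT 4 /\ 0 <= qT 4.
Proof.
rewrite /=. split. apply: isq_ge => //. all: rewrite ?expr2; try lra. split. apply: (ell_le (lo := 2000/1000)) => //. all: rewrite ?expr2; try lra.
Qed.
Lemma t5 : qT 5 <= isq 5 /\ ell 5 <= LT 5 /\ 0 <= qT 5.
Proof.
rewrite /=. split. apply: isq_ge => //. all: rewrite ?expr2; try lra. split. apply: (ell_le (lo := 2236/1000)) => //. all: rewrite ?expr2; try lra.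
Qed.
Lemma t6 : qT 6 <= isq 6 /\ ell 6 <= LT 6 /\ 0 <= qT 6.
Proof.
rewrite /=. split. apply: isq_ge => //. all: rewrite ?expr2; try lra. split. apply: (ell_le (lo := 2449/1000)) => //. all: rewrite ?expr2; try lra.
Qed.
Lemma t7 : qT 7 <= isq 7 /\ ell 7 <= LT 7 /\ 0 <= qT 7.
Proof.
rewrite /=. split. apply: isq_ge => //. all: rewrite ?expr2; try lra. split. apply: (ell_le (lo := 2645/1000)) => //. all: rewrite ?expr2; try lra.
Qed.
Lemma t8 : qT 8 <= isq 8 /\ ell 8 <= LT 8 /\ 0 <= qT 8.
Proof.
rewrite /=. split. apply: isq_ge => //. all: rewrite ?expr2; try lra. split. apply: (ell_le (lo := 2828/1000)) => //. all: rewrite ?expr2; try lra.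
Qed.
Lemma t9 : qT 9 <= isq 9 /\ ell 9 <= LT 9 /\ 0 <= qT 9.
Proof.
rewrite /=. split. apply: isq_ge => //. all: rewrite ?expr2; try lra. split. apply: (ell_le (lo := 3000/1000)) => //. all: rewrite ?expr2; try lra.
Qed.
Lemma t10 : qT 10 <= isq 10 /\ ell 10 <= LT 10 /\ 0 <= qT 10.
Proof.
rewrite /=. split. apply: isq_ge => //. all: rewrite ?expr2; try lra. split. apply: (ell_le (lo := 3162/1000)) => //. all: rewrite ?expr2; try lra.
Qed.
Lemma t11 : qT 11 <= isq 11 /\ ell 11 <= LT 11 /\ 0 <= qT 11.
Proof.
rewrite /=. split. apply: isq_ge => //. all: rewrite ?expr2; try lra. split. apply: (ell_le (lo := 3316/1000)) => //. all: rewrite ?expr2; try lra.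
Qed.
Lemma t12 : qT 12 <= isq 12 /\ ell 12 <= LT 12 /\ 0 <= qT 12.
Proof.
rewrite /=. split. apply: isq_ge => //. all: rewrite ?expr2; try lra. split. apply: (ell_le (lo := 3464/1000)) => //. all: rewrite ?expr2; try lra.
Qed.
Lemma t13 : qT 13 <= isq 13 /\ ell 13 <= LT 13 /\ 0 <= qT 13.
Proof.
rewrite /=. split. apply: isq_ge => //. all: rewrite ?expr2; try lra. split. apply: (ell_le (lo := 3605/1000)) => //. all: rewrite ?expr2; try lra.
Qed.
Lemma tab (a : nat) : (1 <= a <= 13)%N -> qT a <= isq a /\ ell a <= LT a /\ 0 <= qT a.
Proof.
move=> /andP[h1 h2].
case: a h1 h2 => [//|]; do 13! (try (case=> [_ _|])); last (move=> a _ h; exfalso; lia).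
1: exact: t1.
1: exact: t2.
1: exact: t3.
1: exact: t4.
1: exact: t5.
1: exact: t6.
1: exact: t7.
1: exact: t8.
1: exact: t9.
1: exact: t10.
1: exact: t11.
1: exact: t12.
1: exact: t13.
Qed.
Lemma pair11 (a b : nat) : (1 <= a)%N -> (1 <= b)%N -> (a + b <= 12)%N ->
  (6/100 : R) + (LT a + LT b) * (302/1000) <= qT a * qT b.
Proof.
move: a b => a b.
case: a => [|a]; first by move=> *; exfalso; lia.
case: a => [|a].
  case: b => [|b]; first by move=> *; exfalso; lia.
  case: b => [|b].
    move=> _ _ _ /=; lra.
  case: b => [|b].
    move=> _ _ _ /=; lra.
  case: b => [|b].
    move=> _ _ _ /=; lra.
  case: b => [|b].
    move=> _ _ _ /=; lra.
  case: b => [|b].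
    move=> _ _ _ /=; lra.
  case: b => [|b].
    move=> _ _ _ /=; lra.
  case: b => [|b].
    move=> _ _ _ /=; lra.
  case: b => [|b].
    move=> _ _ _ /=; lra.
  case: b => [|b].
    move=> _ _ _ /=; lra.
  case: b => [|b].
    move=> _ _ _ /=; lra.
  case: b => [|b].
    move=> _ _ _ /=; lra.
  case: b => [|b].
    by move=> *; exfalso; lia.
  case: b => [|b].
    by move=> *; exfalso; lia.
  by move=> *; exfalso; lia.
case: a => [|a].
  case: b => [|b]; first by move=> *; exfalso; lia.
  case: b => [|b].
    move=> _ _ _ /=; lra.
  case: b => [|b].
    move=> _ _ _ /=; lra.
  case: b => [|b].
    move=> _ _ _ /=; lra.
  case: b => [|b].
    move=> _ _ _ /=; lra.
  case: b => [|b].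
    move=> _ _ _ /=; lra.
  case: b => [|b].
    move=> _ _ _ /=; lra.
  case: b => [|b].
    move=> _ _ _ /=; lra.
  case: b => [|b].
    move=> _ _ _ /=; lra.
  case: b => [|b].
    move=> _ _ _ /=; lra.
  case: b => [|b].
    move=> _ _ _ /=; lra.
  case: b => [|b].
    by move=> *; exfalso; lia.
  case: b => [|b].
    by move=> *; exfalso; lia.
  case: b => [|b].
    by move=> *; exfalso; lia.
  by move=> *; exfalso; lia.
case: a => [|a].
  case: b => [|b]; first by move=> *; exfalso; lia.
  case: b => [|b].
    move=> _ _ _ /=; lra.
  case: b => [|b].
    move=> _ _ _ /=; lra.
  case: b => [|b].
    move=> _ _ _ /=; lra.
  case: b => [|b].
    move=> _ _ _ /=; lra.
  case: b => [|b].
    move=> _ _ _ /=; lra.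
  case: b => [|b].
    move=> _ _ _ /=; lra.
  case: b => [|b].
    move=> _ _ _ /=; lra.
  case: b => [|b].
    move=> _ _ _ /=; lra.
  case: b => [|b].
    move=> _ _ _ /=; lra.
  case: b => [|b].
    by move=> *; exfalso; lia.
  case: b => [|b].
    by move=> *; exfalso; lia.
  case: b => [|b].
    by move=> *; exfalso; lia.
  case: b => [|b].
    by move=> *; exfalso; lia.
  by move=> *; exfalso; lia.
case: a => [|a].
  case: b => [|b]; first by move=> *; exfalso; lia.
  case: b => [|b].
    move=> _ _ _ /=; lra.
  case: b => [|b].
    move=> _ _ _ /=; lra.
  case: b => [|b].
    move=> _ _ _ /=; lra.
  case: b => [|b].
    move=> _ _ _ /=; lra.
  case: b => [|b].
    move=> _ _ _ /=; lra.
  case: b => [|b].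
    move=> _ _ _ /=; lra.
  case: b => [|b].
    move=> _ _ _ /=; lra.
  case: b => [|b].
    move=> _ _ _ /=; lra.
  case: b => [|b].
    by move=> *; exfalso; lia.
  case: b => [|b].
    by move=> *; exfalso; lia.
  case: b => [|b].
    by move=> *; exfalso; lia.
  case: b => [|b].
    by move=> *; exfalso; lia.
  case: b => [|b].
    by move=> *; exfalso; lia.
  by move=> *; exfalso; lia.
case: a => [|a].
  case: b => [|b]; first by move=> *; exfalso; lia.
  case: b => [|b].
    move=> _ _ _ /=; lra.
  case: b => [|b].
    move=> _ _ _ /=; lra.
  case: b => [|b].
    move=> _ _ _ /=; lra.
  case: b => [|b].
    move=> _ _ _ /=; lra.
  case: b => [|b].
    move=> _ _ _ /=; lra.
  case: b => [|b].
    move=> _ _ _ /=; lra.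
  case: b => [|b].
    move=> _ _ _ /=; lra.
  case: b => [|b].
    by move=> *; exfalso; lia.
  case: b => [|b].
    by move=> *; exfalso; lia.
  case: b => [|b].
    by move=> *; exfalso; lia.
  case: b => [|b].
    by move=> *; exfalso; lia.
  case: b => [|b].
    by move=> *; exfalso; lia.
  case: b => [|b].
    by move=> *; exfalso; lia.
  by move=> *; exfalso; lia.
case: a => [|a].
  case: b => [|b]; first by move=> *; exfalso; lia.
  case: b => [|b].
    move=> _ _ _ /=; lra.
  case: b => [|b].
    move=> _ _ _ /=; lra.
  case: b => [|b].
    move=> _ _ _ /=; lra.
  case: b => [|b].
    move=> _ _ _ /=; lra.
  case: b => [|b].
    move=> _ _ _ /=; lra.
  case: b => [|b].
    move=> _ _ _ /=; lra.
  case: b => [|b].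
    by move=> *; exfalso; lia.
  case: b => [|b].
    by move=> *; exfalso; lia.
  case: b => [|b].
    by move=> *; exfalso; lia.
  case: b => [|b].
    by move=> *; exfalso; lia.
  case: b => [|b].
    by move=> *; exfalso; lia.
  case: b => [|b].
    by move=> *; exfalso; lia.
  case: b => [|b].
    by move=> *; exfalso; lia.
  by move=> *; exfalso; lia.
case: a => [|a].
  case: b => [|b]; first by move=> *; exfalso; lia.
  case: b => [|b].
    move=> _ _ _ /=; lra.
  case: b => [|b].
    move=> _ _ _ /=; lra.
  case: b => [|b].
    move=> _ _ _ /=; lra.
  case: b => [|b].
    move=> _ _ _ /=; lra.
  case: b => [|b].
    move=> _ _ _ /=; lra.
  case: b => [|b].
    by move=> *; exfalso; lia.
  case: b => [|b].
    by move=> *; exfalso; lia.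
  case: b => [|b].
    by move=> *; exfalso; lia.
  case: b => [|b].
    by move=> *; exfalso; lia.
  case: b => [|b].
    by move=> *; exfalso; lia.
  case: b => [|b].
    by move=> *; exfalso; lia.
  case: b => [|b].
    by move=> *; exfalso; lia.
  case: b => [|b].
    by move=> *; exfalso; lia.
  by move=> *; exfalso; lia.
case: a => [|a].
  case: b => [|b]; first by move=> *; exfalso; lia.
  case: b => [|b].
    move=> _ _ _ /=; lra.
  case: b => [|b].
    move=> _ _ _ /=; lra.
  case: b => [|b].
    move=> _ _ _ /=; lra.
  case: b => [|b].
    move=> _ _ _ /=; lra.
  case: b => [|b].
    by move=> *; exfalso; lia.
  case: b => [|b].
    by move=> *; exfalso; lia.
  case: b => [|b].
    by move=> *; exfalso; lia.
  case: b => [|b].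
    by move=> *; exfalso; lia.
  case: b => [|b].
    by move=> *; exfalso; lia.
  case: b => [|b].
    by move=> *; exfalso; lia.
  case: b => [|b].
    by move=> *; exfalso; lia.
  case: b => [|b].
    by move=> *; exfalso; lia.
  case: b => [|b].
    by move=> *; exfalso; lia.
  by move=> *; exfalso; lia.
case: a => [|a].
  case: b => [|b]; first by move=> *; exfalso; lia.
  case: b => [|b].
    move=> _ _ _ /=; lra.
  case: b => [|b].
    move=> _ _ _ /=; lra.
  case: b => [|b].
    move=> _ _ _ /=; lra.
  case: b => [|b].
    by move=> *; exfalso; lia.
  case: b => [|b].
    by move=> *; exfalso; lia.
  case: b => [|b].
    by move=> *; exfalso; lia.
  case: b => [|b].
    by move=> *; exfalso; lia.
  case: b => [|b].
    by move=> *; exfalso; lia.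
  case: b => [|b].
    by move=> *; exfalso; lia.
  case: b => [|b].
    by move=> *; exfalso; lia.
  case: b => [|b].
    by move=> *; exfalso; lia.
  case: b => [|b].
    by move=> *; exfalso; lia.
  case: b => [|b].
    by move=> *; exfalso; lia.
  by move=> *; exfalso; lia.
case: a => [|a].
  case: b => [|b]; first by move=> *; exfalso; lia.
  case: b => [|b].
    move=> _ _ _ /=; lra.
  case: b => [|b].
    move=> _ _ _ /=; lra.
  case: b => [|b].
    by move=> *; exfalso; lia.
  case: b => [|b].
    by move=> *; exfalso; lia.
  case: b => [|b].
    by move=> *; exfalso; lia.
  case: b => [|b].
    by move=> *; exfalso; lia.
  case: b => [|b].
    by move=> *; exfalso; lia.
  case: b => [|b].
    by move=> *; exfalso; lia.
  case: b => [|b].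
    by move=> *; exfalso; lia.
  case: b => [|b].
    by move=> *; exfalso; lia.
  case: b => [|b].
    by move=> *; exfalso; lia.
  case: b => [|b].
    by move=> *; exfalso; lia.
  case: b => [|b].
    by move=> *; exfalso; lia.
  by move=> *; exfalso; lia.
case: a => [|a].
  case: b => [|b]; first by move=> *; exfalso; lia.
  case: b => [|b].
    move=> _ _ _ /=; lra.
  case: b => [|b].
    by move=> *; exfalso; lia.
  case: b => [|b].
    by move=> *; exfalso; lia.
  case: b => [|b].
    by move=> *; exfalso; lia.
  case: b => [|b].
    by move=> *; exfalso; lia.
  case: b => [|b].
    by move=> *; exfalso; lia.
  case: b => [|b].
    by move=> *; exfalso; lia.
  case: b => [|b].
    by move=> *; exfalso; lia.
  case: b => [|b].
    by move=> *; exfalso; lia.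
  case: b => [|b].
    by move=> *; exfalso; lia.
  case: b => [|b].
    by move=> *; exfalso; lia.
  case: b => [|b].
    by move=> *; exfalso; lia.
  case: b => [|b].
    by move=> *; exfalso; lia.
  by move=> *; exfalso; lia.
case: a => [|a].
  case: b => [|b]; first by move=> *; exfalso; lia.
  case: b => [|b].
    by move=> *; exfalso; lia.
  case: b => [|b].
    by move=> *; exfalso; lia.
  case: b => [|b].
    by move=> *; exfalso; lia.
  case: b => [|b].
    by move=> *; exfalso; lia.
  case: b => [|b].
    by move=> *; exfalso; lia.
  case: b => [|b].
    by move=> *; exfalso; lia.
  case: b => [|b].
    by move=> *; exfalso; lia.
  case: b => [|b].
    by move=> *; exfalso; lia.
  case: b => [|b].
    by move=> *; exfalso; lia.
  case: b => [|b].
    by move=> *; exfalso; lia.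
  case: b => [|b].
    by move=> *; exfalso; lia.
  case: b => [|b].
    by move=> *; exfalso; lia.
  case: b => [|b].
    by move=> *; exfalso; lia.
  by move=> *; exfalso; lia.
case: a => [|a].
  case: b => [|b]; first by move=> *; exfalso; lia.
  case: b => [|b].
    by move=> *; exfalso; lia.
  case: b => [|b].
    by move=> *; exfalso; lia.
  case: b => [|b].
    by move=> *; exfalso; lia.
  case: b => [|b].
    by move=> *; exfalso; lia.
  case: b => [|b].
    by move=> *; exfalso; lia.
  case: b => [|b].
    by move=> *; exfalso; lia.
  case: b => [|b].
    by move=> *; exfalso; lia.
  case: b => [|b].
    by move=> *; exfalso; lia.
  case: b => [|b].
    by move=> *; exfalso; lia.
  case: b => [|b].
    by move=> *; exfalso; lia.
  case: b => [|b].
    by move=> *; exfalso; lia.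
  case: b => [|b].
    by move=> *; exfalso; lia.
  case: b => [|b].
    by move=> *; exfalso; lia.
  by move=> *; exfalso; lia.
by move=> *; exfalso; lia.
Qed.
Lemma pair10 (a b : nat) : (1 <= a)%N -> (1 <= b)%N -> (a + b <= 13)%N ->
  (7/100 : R) + (LT a + LT b) * (317/1000) <= qT a * qT b.
Proof.
move: a b => a b.
case: a => [|a]; first by move=> *; exfalso; lia.
case: a => [|a].
  case: b => [|b]; first by move=> *; exfalso; lia.
  case: b => [|b].
    move=> _ _ _ /=; lra.
  case: b => [|b].
    move=> _ _ _ /=; lra.
  case: b => [|b].
    move=> _ _ _ /=; lra.
  case: b => [|b].
    move=> _ _ _ /=; lra.
  case: b => [|b].
    move=> _ _ _ /=; lra.
  case: b => [|b].
    move=> _ _ _ /=; lra.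
  case: b => [|b].
    move=> _ _ _ /=; lra.
  case: b => [|b].
    move=> _ _ _ /=; lra.
  case: b => [|b].
    move=> _ _ _ /=; lra.
  case: b => [|b].
    move=> _ _ _ /=; lra.
  case: b => [|b].
    move=> _ _ _ /=; lra.
  case: b => [|b].
    move=> _ _ _ /=; lra.
  case: b => [|b].
    by move=> *; exfalso; lia.
  by move=> *; exfalso; lia.
case: a => [|a].
  case: b => [|b]; first by move=> *; exfalso; lia.
  case: b => [|b].
    move=> _ _ _ /=; lra.
  case: b => [|b].
    move=> _ _ _ /=; lra.
  case: b => [|b].
    move=> _ _ _ /=; lra.
  case: b => [|b].
    move=> _ _ _ /=; lra.
  case: b => [|b].
    move=> _ _ _ /=; lra.
  case: b => [|b].
    move=> _ _ _ /=; lra.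
  case: b => [|b].
    move=> _ _ _ /=; lra.
  case: b => [|b].
    move=> _ _ _ /=; lra.
  case: b => [|b].
    move=> _ _ _ /=; lra.
  case: b => [|b].
    move=> _ _ _ /=; lra.
  case: b => [|b].
    move=> _ _ _ /=; lra.
  case: b => [|b].
    by move=> *; exfalso; lia.
  case: b => [|b].
    by move=> *; exfalso; lia.
  by move=> *; exfalso; lia.
case: a => [|a].
  case: b => [|b]; first by move=> *; exfalso; lia.
  case: b => [|b].
    move=> _ _ _ /=; lra.
  case: b => [|b].
    move=> _ _ _ /=; lra.
  case: b => [|b].
    move=> _ _ _ /=; lra.
  case: b => [|b].
    move=> _ _ _ /=; lra.
  case: b => [|b].
    move=> _ _ _ /=; lra.
  case: b => [|b].
    move=> _ _ _ /=; lra.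
  case: b => [|b].
    move=> _ _ _ /=; lra.
  case: b => [|b].
    move=> _ _ _ /=; lra.
  case: b => [|b].
    move=> _ _ _ /=; lra.
  case: b => [|b].
    move=> _ _ _ /=; lra.
  case: b => [|b].
    by move=> *; exfalso; lia.
  case: b => [|b].
    by move=> *; exfalso; lia.
  case: b => [|b].
    by move=> *; exfalso; lia.
  by move=> *; exfalso; lia.
case: a => [|a].
  case: b => [|b]; first by move=> *; exfalso; lia.
  case: b => [|b].
    move=> _ _ _ /=; lra.
  case: b => [|b].
    move=> _ _ _ /=; lra.
  case: b => [|b].
    move=> _ _ _ /=; lra.
  case: b => [|b].
    move=> _ _ _ /=; lra.
  case: b => [|b].
    move=> _ _ _ /=; lra.
  case: b => [|b].
    move=> _ _ _ /=; lra.
  case: b => [|b].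
    move=> _ _ _ /=; lra.
  case: b => [|b].
    move=> _ _ _ /=; lra.
  case: b => [|b].
    move=> _ _ _ /=; lra.
  case: b => [|b].
    by move=> *; exfalso; lia.
  case: b => [|b].
    by move=> *; exfalso; lia.
  case: b => [|b].
    by move=> *; exfalso; lia.
  case: b => [|b].
    by move=> *; exfalso; lia.
  by move=> *; exfalso; lia.
case: a => [|a].
  case: b => [|b]; first by move=> *; exfalso; lia.
  case: b => [|b].
    move=> _ _ _ /=; lra.
  case: b => [|b].
    move=> _ _ _ /=; lra.
  case: b => [|b].
    move=> _ _ _ /=; lra.
  case: b => [|b].
    move=> _ _ _ /=; lra.
  case: b => [|b].
    move=> _ _ _ /=; lra.
  case: b => [|b].
    move=> _ _ _ /=; lra.
  case: b => [|b].
    move=> _ _ _ /=; lra.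
  case: b => [|b].
    move=> _ _ _ /=; lra.
  case: b => [|b].
    by move=> *; exfalso; lia.
  case: b => [|b].
    by move=> *; exfalso; lia.
  case: b => [|b].
    by move=> *; exfalso; lia.
  case: b => [|b].
    by move=> *; exfalso; lia.
  case: b => [|b].
    by move=> *; exfalso; lia.
  by move=> *; exfalso; lia.
case: a => [|a].
  case: b => [|b]; first by move=> *; exfalso; lia.
  case: b => [|b].
    move=> _ _ _ /=; lra.
  case: b => [|b].
    move=> _ _ _ /=; lra.
  case: b => [|b].
    move=> _ _ _ /=; lra.
  case: b => [|b].
    move=> _ _ _ /=; lra.
  case: b => [|b].
    move=> _ _ _ /=; lra.
  case: b => [|b].
    move=> _ _ _ /=; lra.
  case: b => [|b].
    move=> _ _ _ /=; lra.
  case: b => [|b].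
    by move=> *; exfalso; lia.
  case: b => [|b].
    by move=> *; exfalso; lia.
  case: b => [|b].
    by move=> *; exfalso; lia.
  case: b => [|b].
    by move=> *; exfalso; lia.
  case: b => [|b].
    by move=> *; exfalso; lia.
  case: b => [|b].
    by move=> *; exfalso; lia.
  by move=> *; exfalso; lia.
case: a => [|a].
  case: b => [|b]; first by move=> *; exfalso; lia.
  case: b => [|b].
    move=> _ _ _ /=; lra.
  case: b => [|b].
    move=> _ _ _ /=; lra.
  case: b => [|b].
    move=> _ _ _ /=; lra.
  case: b => [|b].
    move=> _ _ _ /=; lra.
  case: b => [|b].
    move=> _ _ _ /=; lra.
  case: b => [|b].
    move=> _ _ _ /=; lra.
  case: b => [|b].
    by move=> *; exfalso; lia.
  case: b => [|b].
    by move=> *; exfalso; lia.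
  case: b => [|b].
    by move=> *; exfalso; lia.
  case: b => [|b].
    by move=> *; exfalso; lia.
  case: b => [|b].
    by move=> *; exfalso; lia.
  case: b => [|b].
    by move=> *; exfalso; lia.
  case: b => [|b].
    by move=> *; exfalso; lia.
  by move=> *; exfalso; lia.
case: a => [|a].
  case: b => [|b]; first by move=> *; exfalso; lia.
  case: b => [|b].
    move=> _ _ _ /=; lra.
  case: b => [|b].
    move=> _ _ _ /=; lra.
  case: b => [|b].
    move=> _ _ _ /=; lra.
  case: b => [|b].
    move=> _ _ _ /=; lra.
  case: b => [|b].
    move=> _ _ _ /=; lra.
  case: b => [|b].
    by move=> *; exfalso; lia.
  case: b => [|b].
    by move=> *; exfalso; lia.
  case: b => [|b].
    by move=> *; exfalso; lia.
  case: b => [|b].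
    by move=> *; exfalso; lia.
  case: b => [|b].
    by move=> *; exfalso; lia.
  case: b => [|b].
    by move=> *; exfalso; lia.
  case: b => [|b].
    by move=> *; exfalso; lia.
  case: b => [|b].
    by move=> *; exfalso; lia.
  by move=> *; exfalso; lia.
case: a => [|a].
  case: b => [|b]; first by move=> *; exfalso; lia.
  case: b => [|b].
    move=> _ _ _ /=; lra.
  case: b => [|b].
    move=> _ _ _ /=; lra.
  case: b => [|b].
    move=> _ _ _ /=; lra.
  case: b => [|b].
    move=> _ _ _ /=; lra.
  case: b => [|b].
    by move=> *; exfalso; lia.
  case: b => [|b].
    by move=> *; exfalso; lia.
  case: b => [|b].
    by move=> *; exfalso; lia.
  case: b => [|b].
    by move=> *; exfalso; lia.
  case: b => [|b].
    by move=> *; exfalso; lia.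
  case: b => [|b].
    by move=> *; exfalso; lia.
  case: b => [|b].
    by move=> *; exfalso; lia.
  case: b => [|b].
    by move=> *; exfalso; lia.
  case: b => [|b].
    by move=> *; exfalso; lia.
  by move=> *; exfalso; lia.
case: a => [|a].
  case: b => [|b]; first by move=> *; exfalso; lia.
  case: b => [|b].
    move=> _ _ _ /=; lra.
  case: b => [|b].
    move=> _ _ _ /=; lra.
  case: b => [|b].
    move=> _ _ _ /=; lra.
  case: b => [|b].
    by move=> *; exfalso; lia.
  case: b => [|b].
    by move=> *; exfalso; lia.
  case: b => [|b].
    by move=> *; exfalso; lia.
  case: b => [|b].
    by move=> *; exfalso; lia.
  case: b => [|b].
    by move=> *; exfalso; lia.
  case: b => [|b].
    by move=> *; exfalso; lia.
  case: b => [|b].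
    by move=> *; exfalso; lia.
  case: b => [|b].
    by move=> *; exfalso; lia.
  case: b => [|b].
    by move=> *; exfalso; lia.
  case: b => [|b].
    by move=> *; exfalso; lia.
  by move=> *; exfalso; lia.
case: a => [|a].
  case: b => [|b]; first by move=> *; exfalso; lia.
  case: b => [|b].
    move=> _ _ _ /=; lra.
  case: b => [|b].
    move=> _ _ _ /=; lra.
  case: b => [|b].
    by move=> *; exfalso; lia.
  case: b => [|b].
    by move=> *; exfalso; lia.
  case: b => [|b].
    by move=> *; exfalso; lia.
  case: b => [|b].
    by move=> *; exfalso; lia.
  case: b => [|b].
    by move=> *; exfalso; lia.
  case: b => [|b].
    by move=> *; exfalso; lia.
  case: b => [|b].
    by move=> *; exfalso; lia.
  case: b => [|b].
    by move=> *; exfalso; lia.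
  case: b => [|b].
    by move=> *; exfalso; lia.
  case: b => [|b].
    by move=> *; exfalso; lia.
  case: b => [|b].
    by move=> *; exfalso; lia.
  by move=> *; exfalso; lia.
case: a => [|a].
  case: b => [|b]; first by move=> *; exfalso; lia.
  case: b => [|b].
    move=> _ _ _ /=; lra.
  case: b => [|b].
    by move=> *; exfalso; lia.
  case: b => [|b].
    by move=> *; exfalso; lia.
  case: b => [|b].
    by move=> *; exfalso; lia.
  case: b => [|b].
    by move=> *; exfalso; lia.
  case: b => [|b].
    by move=> *; exfalso; lia.
  case: b => [|b].
    by move=> *; exfalso; lia.
  case: b => [|b].
    by move=> *; exfalso; lia.
  case: b => [|b].
    by move=> *; exfalso; lia.
  case: b => [|b].
    by move=> *; exfalso; lia.
  case: b => [|b].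
    by move=> *; exfalso; lia.
  case: b => [|b].
    by move=> *; exfalso; lia.
  case: b => [|b].
    by move=> *; exfalso; lia.
  by move=> *; exfalso; lia.
case: a => [|a].
  case: b => [|b]; first by move=> *; exfalso; lia.
  case: b => [|b].
    by move=> *; exfalso; lia.
  case: b => [|b].
    by move=> *; exfalso; lia.
  case: b => [|b].
    by move=> *; exfalso; lia.
  case: b => [|b].
    by move=> *; exfalso; lia.
  case: b => [|b].
    by move=> *; exfalso; lia.
  case: b => [|b].
    by move=> *; exfalso; lia.
  case: b => [|b].
    by move=> *; exfalso; lia.
  case: b => [|b].
    by move=> *; exfalso; lia.
  case: b => [|b].
    by move=> *; exfalso; lia.
  case: b => [|b].
    by move=> *; exfalso; lia.
  case: b => [|b].
    by move=> *; exfalso; lia.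
  case: b => [|b].
    by move=> *; exfalso; lia.
  case: b => [|b].
    by move=> *; exfalso; lia.
  by move=> *; exfalso; lia.
by move=> *; exfalso; lia.
Qed.
Lemma pair9a (a b : nat) : (1 <= a)%N -> (1 <= b)%N -> (a + b <= 13)%N ->
  (75/1000 : R) + (LT a + LT b) * (334/1000) <= qT a * qT b.
Proof.
move: a b => a b.
case: a => [|a]; first by move=> *; exfalso; lia.
case: a => [|a].
  case: b => [|b]; first by move=> *; exfalso; lia.
  case: b => [|b].
    move=> _ _ _ /=; lra.
  case: b => [|b].
    move=> _ _ _ /=; lra.
  case: b => [|b].
    move=> _ _ _ /=; lra.
  case: b => [|b].
    move=> _ _ _ /=; lra.
  case: b => [|b].
    move=> _ _ _ /=; lra.
  case: b => [|b].
    move=> _ _ _ /=; lra.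
  case: b => [|b].
    move=> _ _ _ /=; lra.
  case: b => [|b].
    move=> _ _ _ /=; lra.
  case: b => [|b].
    move=> _ _ _ /=; lra.
  case: b => [|b].
    move=> _ _ _ /=; lra.
  case: b => [|b].
    move=> _ _ _ /=; lra.
  case: b => [|b].
    move=> _ _ _ /=; lra.
  case: b => [|b].
    by move=> *; exfalso; lia.
  by move=> *; exfalso; lia.
case: a => [|a].
  case: b => [|b]; first by move=> *; exfalso; lia.
  case: b => [|b].
    move=> _ _ _ /=; lra.
  case: b => [|b].
    move=> _ _ _ /=; lra.
  case: b => [|b].
    move=> _ _ _ /=; lra.
  case: b => [|b].
    move=> _ _ _ /=; lra.
  case: b => [|b].
    move=> _ _ _ /=; lra.
  case: b => [|b].
    move=> _ _ _ /=; lra.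
  case: b => [|b].
    move=> _ _ _ /=; lra.
  case: b => [|b].
    move=> _ _ _ /=; lra.
  case: b => [|b].
    move=> _ _ _ /=; lra.
  case: b => [|b].
    move=> _ _ _ /=; lra.
  case: b => [|b].
    move=> _ _ _ /=; lra.
  case: b => [|b].
    by move=> *; exfalso; lia.
  case: b => [|b].
    by move=> *; exfalso; lia.
  by move=> *; exfalso; lia.
case: a => [|a].
  case: b => [|b]; first by move=> *; exfalso; lia.
  case: b => [|b].
    move=> _ _ _ /=; lra.
  case: b => [|b].
    move=> _ _ _ /=; lra.
  case: b => [|b].
    move=> _ _ _ /=; lra.
  case: b => [|b].
    move=> _ _ _ /=; lra.
  case: b => [|b].
    move=> _ _ _ /=; lra.
  case: b => [|b].
    move=> _ _ _ /=; lra.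
  case: b => [|b].
    move=> _ _ _ /=; lra.
  case: b => [|b].
    move=> _ _ _ /=; lra.
  case: b => [|b].
    move=> _ _ _ /=; lra.
  case: b => [|b].
    move=> _ _ _ /=; lra.
  case: b => [|b].
    by move=> *; exfalso; lia.
  case: b => [|b].
    by move=> *; exfalso; lia.
  case: b => [|b].
    by move=> *; exfalso; lia.
  by move=> *; exfalso; lia.
case: a => [|a].
  case: b => [|b]; first by move=> *; exfalso; lia.
  case: b => [|b].
    move=> _ _ _ /=; lra.
  case: b => [|b].
    move=> _ _ _ /=; lra.
  case: b => [|b].
    move=> _ _ _ /=; lra.
  case: b => [|b].
    move=> _ _ _ /=; lra.
  case: b => [|b].
    move=> _ _ _ /=; lra.
  case: b => [|b].
    move=> _ _ _ /=; lra.
  case: b => [|b].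
    move=> _ _ _ /=; lra.
  case: b => [|b].
    move=> _ _ _ /=; lra.
  case: b => [|b].
    move=> _ _ _ /=; lra.
  case: b => [|b].
    by move=> *; exfalso; lia.
  case: b => [|b].
    by move=> *; exfalso; lia.
  case: b => [|b].
    by move=> *; exfalso; lia.
  case: b => [|b].
    by move=> *; exfalso; lia.
  by move=> *; exfalso; lia.
case: a => [|a].
  case: b => [|b]; first by move=> *; exfalso; lia.
  case: b => [|b].
    move=> _ _ _ /=; lra.
  case: b => [|b].
    move=> _ _ _ /=; lra.
  case: b => [|b].
    move=> _ _ _ /=; lra.
  case: b => [|b].
    move=> _ _ _ /=; lra.
  case: b => [|b].
    move=> _ _ _ /=; lra.
  case: b => [|b].
    move=> _ _ _ /=; lra.
  case: b => [|b].
    move=> _ _ _ /=; lra.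
  case: b => [|b].
    move=> _ _ _ /=; lra.
  case: b => [|b].
    by move=> *; exfalso; lia.
  case: b => [|b].
    by move=> *; exfalso; lia.
  case: b => [|b].
    by move=> *; exfalso; lia.
  case: b => [|b].
    by move=> *; exfalso; lia.
  case: b => [|b].
    by move=> *; exfalso; lia.
  by move=> *; exfalso; lia.
case: a => [|a].
  case: b => [|b]; first by move=> *; exfalso; lia.
  case: b => [|b].
    move=> _ _ _ /=; lra.
  case: b => [|b].
    move=> _ _ _ /=; lra.
  case: b => [|b].
    move=> _ _ _ /=; lra.
  case: b => [|b].
    move=> _ _ _ /=; lra.
  case: b => [|b].
    move=> _ _ _ /=; lra.
  case: b => [|b].
    move=> _ _ _ /=; lra.
  case: b => [|b].
    move=> _ _ _ /=; lra.
  case: b => [|b].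
    by move=> *; exfalso; lia.
  case: b => [|b].
    by move=> *; exfalso; lia.
  case: b => [|b].
    by move=> *; exfalso; lia.
  case: b => [|b].
    by move=> *; exfalso; lia.
  case: b => [|b].
    by move=> *; exfalso; lia.
  case: b => [|b].
    by move=> *; exfalso; lia.
  by move=> *; exfalso; lia.
case: a => [|a].
  case: b => [|b]; first by move=> *; exfalso; lia.
  case: b => [|b].
    move=> _ _ _ /=; lra.
  case: b => [|b].
    move=> _ _ _ /=; lra.
  case: b => [|b].
    move=> _ _ _ /=; lra.
  case: b => [|b].
    move=> _ _ _ /=; lra.
  case: b => [|b].
    move=> _ _ _ /=; lra.
  case: b => [|b].
    move=> _ _ _ /=; lra.
  case: b => [|b].
    by move=> *; exfalso; lia.
  case: b => [|b].
    by move=> *; exfalso; lia.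
  case: b => [|b].
    by move=> *; exfalso; lia.
  case: b => [|b].
    by move=> *; exfalso; lia.
  case: b => [|b].
    by move=> *; exfalso; lia.
  case: b => [|b].
    by move=> *; exfalso; lia.
  case: b => [|b].
    by move=> *; exfalso; lia.
  by move=> *; exfalso; lia.
case: a => [|a].
  case: b => [|b]; first by move=> *; exfalso; lia.
  case: b => [|b].
    move=> _ _ _ /=; lra.
  case: b => [|b].
    move=> _ _ _ /=; lra.
  case: b => [|b].
    move=> _ _ _ /=; lra.
  case: b => [|b].
    move=> _ _ _ /=; lra.
  case: b => [|b].
    move=> _ _ _ /=; lra.
  case: b => [|b].
    by move=> *; exfalso; lia.
  case: b => [|b].
    by move=> *; exfalso; lia.
  case: b => [|b].
    by move=> *; exfalso; lia.
  case: b => [|b].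
    by move=> *; exfalso; lia.
  case: b => [|b].
    by move=> *; exfalso; lia.
  case: b => [|b].
    by move=> *; exfalso; lia.
  case: b => [|b].
    by move=> *; exfalso; lia.
  case: b => [|b].
    by move=> *; exfalso; lia.
  by move=> *; exfalso; lia.
case: a => [|a].
  case: b => [|b]; first by move=> *; exfalso; lia.
  case: b => [|b].
    move=> _ _ _ /=; lra.
  case: b => [|b].
    move=> _ _ _ /=; lra.
  case: b => [|b].
    move=> _ _ _ /=; lra.
  case: b => [|b].
    move=> _ _ _ /=; lra.
  case: b => [|b].
    by move=> *; exfalso; lia.
  case: b => [|b].
    by move=> *; exfalso; lia.
  case: b => [|b].
    by move=> *; exfalso; lia.
  case: b => [|b].
    by move=> *; exfalso; lia.
  case: b => [|b].
    by move=> *; exfalso; lia.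
  case: b => [|b].
    by move=> *; exfalso; lia.
  case: b => [|b].
    by move=> *; exfalso; lia.
  case: b => [|b].
    by move=> *; exfalso; lia.
  case: b => [|b].
    by move=> *; exfalso; lia.
  by move=> *; exfalso; lia.
case: a => [|a].
  case: b => [|b]; first by move=> *; exfalso; lia.
  case: b => [|b].
    move=> _ _ _ /=; lra.
  case: b => [|b].
    move=> _ _ _ /=; lra.
  case: b => [|b].
    move=> _ _ _ /=; lra.
  case: b => [|b].
    by move=> *; exfalso; lia.
  case: b => [|b].
    by move=> *; exfalso; lia.
  case: b => [|b].
    by move=> *; exfalso; lia.
  case: b => [|b].
    by move=> *; exfalso; lia.
  case: b => [|b].
    by move=> *; exfalso; lia.
  case: b => [|b].
    by move=> *; exfalso; lia.
  case: b => [|b].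
    by move=> *; exfalso; lia.
  case: b => [|b].
    by move=> *; exfalso; lia.
  case: b => [|b].
    by move=> *; exfalso; lia.
  case: b => [|b].
    by move=> *; exfalso; lia.
  by move=> *; exfalso; lia.
case: a => [|a].
  case: b => [|b]; first by move=> *; exfalso; lia.
  case: b => [|b].
    move=> _ _ _ /=; lra.
  case: b => [|b].
    move=> _ _ _ /=; lra.
  case: b => [|b].
    by move=> *; exfalso; lia.
  case: b => [|b].
    by move=> *; exfalso; lia.
  case: b => [|b].
    by move=> *; exfalso; lia.
  case: b => [|b].
    by move=> *; exfalso; lia.
  case: b => [|b].
    by move=> *; exfalso; lia.
  case: b => [|b].
    by move=> *; exfalso; lia.
  case: b => [|b].
    by move=> *; exfalso; lia.
  case: b => [|b].
    by move=> *; exfalso; lia.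
  case: b => [|b].
    by move=> *; exfalso; lia.
  case: b => [|b].
    by move=> *; exfalso; lia.
  case: b => [|b].
    by move=> *; exfalso; lia.
  by move=> *; exfalso; lia.
case: a => [|a].
  case: b => [|b]; first by move=> *; exfalso; lia.
  case: b => [|b].
    move=> _ _ _ /=; lra.
  case: b => [|b].
    by move=> *; exfalso; lia.
  case: b => [|b].
    by move=> *; exfalso; lia.
  case: b => [|b].
    by move=> *; exfalso; lia.
  case: b => [|b].
    by move=> *; exfalso; lia.
  case: b => [|b].
    by move=> *; exfalso; lia.
  case: b => [|b].
    by move=> *; exfalso; lia.
  case: b => [|b].
    by move=> *; exfalso; lia.
  case: b => [|b].
    by move=> *; exfalso; lia.
  case: b => [|b].
    by move=> *; exfalso; lia.
  case: b => [|b].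
    by move=> *; exfalso; lia.
  case: b => [|b].
    by move=> *; exfalso; lia.
  case: b => [|b].
    by move=> *; exfalso; lia.
  by move=> *; exfalso; lia.
case: a => [|a].
  case: b => [|b]; first by move=> *; exfalso; lia.
  case: b => [|b].
    by move=> *; exfalso; lia.
  case: b => [|b].
    by move=> *; exfalso; lia.
  case: b => [|b].
    by move=> *; exfalso; lia.
  case: b => [|b].
    by move=> *; exfalso; lia.
  case: b => [|b].
    by move=> *; exfalso; lia.
  case: b => [|b].
    by move=> *; exfalso; lia.
  case: b => [|b].
    by move=> *; exfalso; lia.
  case: b => [|b].
    by move=> *; exfalso; lia.
  case: b => [|b].
    by move=> *; exfalso; lia.
  case: b => [|b].
    by move=> *; exfalso; lia.
  case: b => [|b].
    by move=> *; exfalso; lia.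
  case: b => [|b].
    by move=> *; exfalso; lia.
  case: b => [|b].
    by move=> *; exfalso; lia.
  by move=> *; exfalso; lia.
by move=> *; exfalso; lia.
Qed.
Lemma pair9b (a b : nat) : (1 <= a)%N -> (1 <= b)%N -> (a + b <= 14)%N ->
  (71/1000 : R) + (LT a + LT b) * (334/1000) <= qT a * qT b.
Proof.
move=> ha hb hab; case: (leqP (a + b) 13) => h.
  by apply: le_trans (pair9a ha hb h); rewrite lerD2r; lra.
have Eb : b = (14 - a)%N by lia.
subst b; have : (a <= 13)%N by lia.
move: ha hb h hab; case: a => [|a]; first by move=> *; exfalso; lia.
case: a => [|a]; first by move=> _ _ _ _ _ /=; lra.
case: a => [|a]; first by move=> _ _ _ _ _ /=; lra.
case: a => [|a]; first by move=> _ _ _ _ _ /=; lra.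
case: a => [|a]; first by move=> _ _ _ _ _ /=; lra.
case: a => [|a]; first by move=> _ _ _ _ _ /=; lra.
case: a => [|a]; first by move=> _ _ _ _ _ /=; lra.
case: a => [|a]; first by move=> _ _ _ _ _ /=; lra.
case: a => [|a]; first by move=> _ _ _ _ _ /=; lra.
case: a => [|a]; first by move=> _ _ _ _ _ /=; lra.
case: a => [|a]; first by move=> _ _ _ _ _ /=; lra.
case: a => [|a]; first by move=> _ _ _ _ _ /=; lra.
case: a => [|a]; first by move=> _ _ _ _ _ /=; lra.
case: a => [|a]; first by move=> _ _ _ _ _ /=; lra.
by move=> *; exfalso; lia.
Qed.
End Num.

Unset Implicit Arguments.
Local Open Scope ring_scope.

Lemma vertex_id (R : rcfType) (s x : R) : 0 < s -> 0 < x ->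
  (s * x)^-1 = s^-1 - (x^+2 - 1) * ((x^+2 + x)^-1 * s^-1).
Proof.
move=> s0 x0.
have xx : x ^+ 2 + x != 0 by apply: lt0r_neq0; rewrite expr2; nra.
by field; rewrite ?xx ?(lt0r_neq0 s0) ?(lt0r_neq0 x0) /=.
Qed.

Lemma sqrt_lb (R : rcfType) (D : nat) (l : R) : 0 <= l -> l ^+ 2 <= D%:R -> l <= Num.sqrt (D%:R).
Proof.
move=> l0 h; have [x0 x2] := sqrt_facts R D.
move: x0 x2; set x := Num.sqrt _ => x0 x2; rewrite -x2 !expr2 in h *; nra.
Qed.

Lemma sqrt_ub (R : rcfType) (D : nat) (l : R) : 0 <= l -> D%:R <= l ^+ 2 -> Num.sqrt (D%:R) <= l.
Proof.
move=> l0 h; have [x0 x2] := sqrt_facts R D.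
move: x0 x2; set x := Num.sqrt _ => x0 x2; rewrite -x2 !expr2 in h *; nra.
Qed.

Lemma max_attained (adj : rel 'I_12) : exists w, deg adj w = max_deg adj.
Proof.
rewrite /max_deg; have [i0 ->] := @bigop.eq_bigmax _ (deg adj) (ltac:(by rewrite card_ord)).
by exists i0.
Qed.

Lemma bnd13 (x y B : nat) : (0 < x)%N -> (0 < y)%N -> (x + y <= B)%N -> (B <= 14)%N ->
  (1 <= x <= 13)%N /\ (1 <= y <= 13)%N.
Proof. move=> *; split; apply/andP; split; lia. Qed.

Lemma key (R : rcfType) (adj : rel 'I_12) (w : 'I_12) (B : nat) (mu io : R) :
  symmetric adj -> irreflexive adj -> (0 < deg adj w)%N ->
  (B <= 14)%N -> (num_edges adj + 3 <= deg adj w + B)%N ->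
  (Num.sqrt ((deg adj w)%:R : R))^-1 <= io ->
  (forall a b, (1 <= a)%N -> (1 <= b)%N -> (a + b <= B)%N ->
     mu + (LT R a + LT R b) * io <= qT R a * qT R b) ->
  Num.sqrt ((deg adj w)%:R : R) + mu * ((num_edges adj)%:R - (deg adj w)%:R) <= randic R adj.
Proof.
move=> Hsym Hirr Dpos HB Hm Hio Hpair.
set d := deg adj.
set s := Num.sqrt ((d w)%:R : R).
have s0 : 0 < s by rewrite sqrtr_gt0 ltr0n.
have s2 : s ^+ 2 = (d w)%:R by rewrite sqr_sqrtr // ler0n.
pose c' := fun u => ell R (d u) * s^-1.
pose cu := fun (u v : 'I_12) => if adj w u then c' u else 0.
pose r := fun u v => (Num.sqrt ((d u)%:R * (d v)%:R : R))^-1.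
have rS : forall u v, r u v = r v u by move=> u v; rewrite /r mulrC.
have dpos : forall u v, adj u v -> (0 < d u)%N.
  by move=> u v h; apply/card_gt0P; exists v; rewrite inE.
have E1 : randic R adj *+ 2 = OS adj r := pair_half Hsym Hirr rS.
have E2 : OS adj r = (\sum_(v | adj w v) r w v) *+ 2 + HS adj w r := OS_decomp Hsym Hirr w rS.
have E3 : \sum_(v | adj w v) r w v = s - HS adj w cu.
  rewrite /cu HS_cu //.
  have -> : \sum_(v | adj w v) r w v = \sum_(v | adj w v) (s^-1 - ((d v)%:R - 1) * c' v).
    apply: eq_bigr => v hv; rewrite /r /c' /ell.
    have [x0 x2] := sqrt_facts R (d v).
    have xp : 0 < Num.sqrt ((d v)%:R : R) by rewrite sqrtr_gt0 ltr0n (dpos v w) // Hsym.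
    rewrite sqrtrM ?ler0n // vertex_id // x2 //.
  rewrite sumrB; congr (_ - _); last by apply: eq_bigr => v _; rewrite mulrC.
  have -> : \sum_(v | adj w v) s^-1 = (d w)%:R * s^-1.
    by rewrite /d deg_sum mulr_suml; apply: eq_bigr => ? _; rewrite mul1r.
  by rewrite -s2 expr2 -mulrA mulfV ?mulr1 // lt0r_neq0.
have E4 : HS adj w (fun u v => cu v u) = HS adj w cu := HS_sym Hsym w cu.
have E5 : HS adj w (fun _ _ => (1 : R)) = (num_edges adj)%:R *+ 2 - (d w)%:R *+ 2.
  have EO := edges_OS R Hsym Hirr.
  rewrite (OS_decomp Hsym Hirr w) // in EO.
  by rewrite EO /d deg_sum addrAC subrr add0r.
have E6 : HS adj w (fun _ _ => mu) <= HS adj w (fun u v => r u v - cu u v - cu v u).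
  apply: HS_ge => u v /and3P[uw vw huv].
  have uv : u != v by apply/eqP => E; rewrite E Hirr in huv.
  have tr := triple Hsym Hirr R uv uw vw.
  have du := dpos u v huv.
  have dv := dpos v u (ltac:(by rewrite Hsym)).
  have hab : (d u + d v <= B)%N by rewrite /d; lia.
  have [hu hv] := @bnd13 _ _ _ du dv hab HB.
  have [qa [la qa0]] := @tab R (d u) hu.
  have [qb [lb qb0]] := @tab R (d v) hv.
  have P1 := Hpair (d u) (d v) du dv hab.
  have P2 : qT R (d u) * qT R (d v) <= isq R (d u) * isq R (d v) by apply: ler_pM.
  have sinv0 : 0 <= s^-1 by rewrite invr_ge0 ltW.
  have cb : forall x, cu x x <= LT R (d x) * io -> True by [].
  have C : forall x y, (1 <= d x <= 13)%N -> cu x y <= LT R (d x) * io.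
    move=> x y hx; have [_ [lx _]] := @tab R (d x) hx.
    have e0 : 0 <= ell R (d x) by rewrite /ell invr_ge0 addr_ge0 ?ler0n ?sqrtr_ge0.
    rewrite /cu /c'; case: ifP => _; first by apply: ler_pM.
    apply: mulr_ge0; [exact: le_trans lx | exact: le_trans Hio].
  have C1 := C u v hu.
  have C2 := C v u hv.
  have -> : r u v = isq R (d u) * isq R (d v) by rewrite /r /isq sqrtrM ?ler0n // invfM.
  lra.
rewrite HS_const E5 in E6.
move: E6; rewrite HS_lin E4 => h.
have e : randic R adj *+ 2 = (s - HS adj w cu) *+ 2 + HS adj w r by rewrite E1 E2 E3.
move: h e; rewrite !mulr2n.
set X := HS adj w cu; set Y := randic R adj; set Z := HS adj w r.
set m := (num_edges adj)%:R; set D := (d w)%:R.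
move=> h e; nra.
Qed.

Lemma rhs_bound (R : rcfType) (k : nat) :
  Num.sqrt (11%:R : R) + (2 * (k.+1)%:R) / (12%:R * Num.sqrt 11%:R)
   <= 3317/1000 + (k.+1)%:R * (503/10000).
Proof.
have tl : (3316/1000 : R) <= Num.sqrt 11%:R by apply: sqrt_lb; rewrite ?expr2; lra.
have tu : Num.sqrt (11%:R : R) <= 3317/1000 by apply: sqrt_ub; rewrite ?expr2; lra.
move: tl tu; set t := Num.sqrt _ => tl tu.
have K0 : (0 : R) <= (k.+1)%:R by rewrite ler0n.
move: K0; set K := (k.+1)%:R => K0.
have : 2 * K / (12%:R * t) <= K * (503/10000).
  rewrite ler_pdivrMr; last by lra.
  nra.
lra.
Qed.

Lemma finish (R : rcfType) (adj : rel 'I_12) (w : 'I_12) (k B D : nat) (mu io l : R) :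
  symmetric adj -> irreflexive adj ->
  deg adj w = D -> num_edges adj = (12 + k)%N -> (0 < D)%N -> (B <= 14)%N ->
  (12 + k + 3 <= D + B)%N -> 0 <= io -> 1 <= io * io * D%:R ->
  (forall a b, (1 <= a)%N -> (1 <= b)%N -> (a + b <= B)%N ->
     mu + (LT R a + LT R b) * io <= qT R a * qT R b) ->
  0 <= l -> l * l <= D%:R ->
  (3317/1000 : R) + (k.+1)%:R * (503/10000) < l + mu * ((12 + k)%:R - D%:R) ->
  Num.sqrt (11%:R : R) + (2 * (k.+1)%:R) / (12%:R * Num.sqrt 11%:R) < randic R adj.
Proof.
move=> Hsym Hirr Hw Hm D0 HB HmB io0 io1 Hp l0 l2 Hf.
have K := @key R adj w B mu io Hsym Hirr.
rewrite Hw Hm in K.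
have := K D0 HB HmB (io_le (R := R) D0 io0 (ltac:(by rewrite expr2))) Hp.
have sl : l <= Num.sqrt (D%:R : R) by apply: sqrt_lb; rewrite ?expr2.
have := rhs_bound R k.
move=> h1 h2; lra.
Qed.

Theorem lemma3p8 (R : rcfType) (adj : rel 'I_12) (k : nat) :
  simple_graph adj -> connected_graph adj ->
  [\/ (max_deg adj = 11)%N /\ (1 <= k <= 8)%N,
      (max_deg adj = 10)%N /\ (4 <= k <= 8)%N
    | (max_deg adj = 9)%N /\ (7 <= k <= 8)%N] ->
  num_edges adj = (12 + k)%N ->
  Num.sqrt (11%:R : R) + (2 * (k.+1)%:R) / (12%:R * Num.sqrt 11%:R)
    < randic R adj.
Proof.
move=> [Hsym Hirr] _ Hcase Hm.
have [w Hw] := max_attained adj.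
have EK : (k.+1)%:R = k%:R + 1 :> R by rewrite -addn1 natrD.
case: Hcase => [[HD /andP[k1 k2]]|[HD /andP[k1 k2]]|[HD /andP[k1 k2]]]; rewrite HD in Hw.
- have kl : (1 : R) <= k%:R by rewrite ler1n.
  have H0 : (12 + k + 3 <= 11 + 12)%N by lia.
  have H1 : (0 : R) <= 302/1000 by lra.
  have H2 : (1 : R) <= 302/1000 * (302/1000) * 11%:R by lra.
  have H3 : (0 : R) <= 3316/1000 by lra.
  have H4 : (3316/1000 : R) * (3316/1000) <= 11%:R by lra.
  have H5 : (3317/1000 : R) + (k.+1)%:R * (503/10000) < 3316/1000 + 6/100 * ((12 + k)%:R - 11%:R).
    rewrite EK ?natrD; lra.
  exact: (@finish R adj w k 12 11 (6/100) (302/1000) (3316/1000) Hsym Hirr Hw Hm isT isT H0 H1 H2 (@pair11 R) H3 H4 H5).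
- have kl : (4%:R : R) <= k%:R by rewrite ler_nat.
  have H0 : (12 + k + 3 <= 10 + 13)%N by lia.
  have H1 : (0 : R) <= 317/1000 by lra.
  have H2 : (1 : R) <= 317/1000 * (317/1000) * 10%:R by lra.
  have H3 : (0 : R) <= 3162/1000 by lra.
  have H4 : (3162/1000 : R) * (3162/1000) <= 10%:R by lra.
  have H5 : (3317/1000 : R) + (k.+1)%:R * (503/10000) < 3162/1000 + 7/100 * ((12 + k)%:R - 10%:R).
    rewrite EK ?natrD; lra.
  exact: (@finish R adj w k 13 10 (7/100) (317/1000) (3162/1000) Hsym Hirr Hw Hm isT isT H0 H1 H2 (@pair10 R) H3 H4 H5).
- have [k7|k8] : k = 7%N \/ k = 8%N by lia.
  + subst k.
  have H0 : (12 + 7 + 3 <= 9 + 13)%N by lia.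
  have H1 : (0 : R) <= 334/1000 by lra.
  have H2 : (1 : R) <= 334/1000 * (334/1000) * 9%:R by lra.
  have H3 : (0 : R) <= 3 by lra.
  have H4 : (3 : R) * (3) <= 9%:R by lra.
  have H5 : (3317/1000 : R) + (7.+1)%:R * (503/10000) < 3 + 75/1000 * ((12 + 7)%:R - 9%:R).
    rewrite EK ?natrD; lra.
  exact: (@finish R adj w 7 13 9 (75/1000) (334/1000) (3) Hsym Hirr Hw Hm isT isT H0 H1 H2 (@pair9a R) H3 H4 H5).
  + subst k.
  have H0 : (12 + 8 + 3 <= 9 + 14)%N by lia.
  have H1 : (0 : R) <= 334/1000 by lra.
  have H2 : (1 : R) <= 334/1000 * (334/1000) * 9%:R by lra.
  have H3 : (0 : R) <= 3 by lra.
  have H4 : (3 : R) * (3) <= 9%:R by lra.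
  have H5 : (3317/1000 : R) + (8.+1)%:R * (503/10000) < 3 + 71/1000 * ((12 + 8)%:R - 9%:R).
    rewrite EK ?natrD; lra.
  exact: (@finish R adj w 8 14 9 (71/1000) (334/1000) (3) Hsym Hirr Hw Hm isT isT H0 H1 H2 (@pair9b R) H3 H4 H5).
Qed.
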